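(* Let $p,N\in\mathbb{N}$, $x_0<\cdots<x_N$, data $y_{n,2k}\in\mathbb{R}$ ($n=0,\dots,N$, $k=0,\dots,p$), and $\alpha\in\Theta_{2p}$. Let $\ell_\alpha$ be the Lidstone FIF and $\phi$ the classical Lidstone interpolation function for this data. Then for $k=1,\dots,p$, $$\|\ell_\alpha^{(2k)}-\phi^{(2k)}\|_\infty\le\frac{|\alpha|_\infty}{\mu^{2k}-|\alpha|_\infty}\big(\|\phi^{(2k)}\|_\infty+M_{2k,2p}\big),$$ where $\mu=\min_{1\le n\le N}a_n$ and $M_{2k,2p}=\frac{2\rho\pi}{3}\sum_{l=0}^{p-k}\big(\frac{x_N-x_0}{\pi}\big)^{2l}$.
   Context: Lidstone polynomials $\Lambda_l$: $\Lambda_0(x)=x$, $\Lambda_l''=\Lambda_{l-1}$, $\Lambda_l(0)=\Lambda_l(1)=0$ for $l\ge1$. $a_n=\frac{x_n-x_{n-1}}{x_N-x_0}$, $L_n(x)=a_nx+\frac{x_Nx_{n-1}-x_0x_n}{x_N-x_0}$. $\Theta_{2p}=\{\alpha\in\mathbb{R}^N:|\alpha_n|<a_n^{2p}\ \forall n\}$. For $\alpha\in\Theta_{2p}$, the Lidstone FIF $\ell_\alpha$ is the unique $C^{2p}[x_0,x_N]$ function satisfying $\ell_\alpha(L_n(x))=\alpha_n\ell_\alpha(x)+q_n(x)$ for $x\in[x_0,x_N]$, $n=1,\dots,N$, where $q_n(x)=\sum_{l=0}^p[(a_n^{2l}y_{n-1,2l}-\alpha_ny_{0,2l})\Lambda_l(\frac{x_N-x}{x_N-x_0})+(a_n^{2l}y_{n,2l}-\alpha_ny_{N,2l})\Lambda_l(\frac{x-x_0}{x_N-x_0})](x_N-x_0)^{2l}$;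 it satisfies $\ell_\alpha^{(2k)}(x_n)=y_{n,2k}$. The classical Lidstone interpolation function $\phi$ is defined on each $[x_{n-1},x_n]$, with $h_n=x_n-x_{n-1}$, by $\phi(x)=\sum_{l=0}^p\big[y_{n-1,2l}\Lambda_l(\frac{x_n-x}{h_n})+y_{n,2l}\Lambda_l(\frac{x-x_{n-1}}{h_n})\big]h_n^{2l}$ (it equals $\ell_0$). Notation: $|\alpha|_\infty=\max_n|\alpha_n|$, $\|f\|_\infty=\sup_{[x_0,x_N]}|f|$, $\rho=\max_{0\le k\le p}\max\{|y_{0,2k}|,|y_{N,2k}|\}$. *)

(* Defs.v *)
From Stdlib Require Import Reals Lra Lia.
Open Scope R_scope.

(* Lidstone polynomials: Lambda_0(x) = x, Lambda_l'' = Lambda_{l-1} on R,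
   Lambda_l(0) = Lambda_l(1) = 0 for l >= 1.  These conditions determine the
   family uniquely. *)
Definition has_second_deriv (f g : R -> R) : Prop :=
  exists f' : R -> R, forall x,
    derivable_pt_lim f x (f' x) /\ derivable_pt_lim f' x (g x).

Definition Lidstone_family (Lam : nat -> R -> R) : Prop :=
  (forall x, Lam 0%nat x = x) /\
  (forall l : nat, has_second_deriv (Lam (S l)) (Lam l)
                   /\ Lam (S l) 0 = 0 /\ Lam (S l) 1 = 0).

(* D is the family of successive derivatives of f on [a,b], up to order m,
   with D m continuous: i.e. f is C^m[a,b] and D j = f^(j) on [a,b].
   (Values of D j outside [a,b] are irrelevant; at the endpoints this gives
   the one-sided derivatives of f restricted to [a,b].) *)
Definition deriv_family (f : R -> R) (D : nat -> R -> R) (m : nat) (a b : R)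
  : Prop :=
  (forall x, a <= x <= b -> D 0%nat x = f x) /\
  (forall (j : nat) x, (j < m)%nat -> a <= x <= b ->
     derivable_pt_lim (D j) x (D (S j) x)) /\
  (forall x, a <= x <= b -> continuity_pt (D m) x).

Fixpoint max_upto (f : nat -> R) (n : nat) : R :=
  match n with
  | O => f 0%nat
  | S n' => Rmax (max_upto f n') (f (S n'))
  end.

Fixpoint min_upto (f : nat -> R) (n : nat) : R :=
  match n with
  | O => f 0%nat
  | S n' => Rmin (min_upto f n') (f (S n'))
  end.

(* Data: nodes xs 0 < ... < xs N; y n k stands for y_{n,2k}. *)

Definition a_coef (xs : nat -> R) (N n : nat) : R :=
  (xs n - xs (n - 1)%nat) / (xs N - xs 0%nat).

Definition L_map (xs : nat -> R) (N n : nat) (x : R) : R :=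
  a_coef xs N n * x + (xs N * xs (n - 1)%nat - xs 0%nat * xs n) / (xs N - xs 0%nat).

Definition q_fun (Lam : nat -> R -> R) (xs : nat -> R) (y : nat -> nat -> R)
  (alpha : nat -> R) (N p n : nat) (x : R) : R :=
  sum_f_R0 (fun l =>
    ((a_coef xs N n ^ (2 * l) * y (n - 1)%nat l - alpha n * y 0%nat l)
        * Lam l ((xs N - x) / (xs N - xs 0%nat))
     + (a_coef xs N n ^ (2 * l) * y n l - alpha n * y N l)
        * Lam l ((x - xs 0%nat) / (xs N - xs 0%nat)))
    * (xs N - xs 0%nat) ^ (2 * l)) p.

(* Classical Lidstone interpolant on the piece [x_{n-1}, x_n]. *)
Definition phi_piece (Lam : nat -> R -> R) (xs : nat -> R) (y : nat -> nat -> R)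
  (p n : nat) (x : R) : R :=
  let h := xs n - xs (n - 1)%nat in
  sum_f_R0 (fun l =>
    (y (n - 1)%nat l * Lam l ((xs n - x) / h)
     + y n l * Lam l ((x - xs (n - 1)%nat) / h)) * h ^ (2 * l)) p.

Definition in_Theta (xs : nat -> R) (N p : nat) (alpha : nat -> R) : Prop :=
  forall n : nat, (1 <= n <= N)%nat -> Rabs (alpha n) < a_coef xs N n ^ (2 * p).

Definition alpha_sup (N : nat) (alpha : nat -> R) : R :=
  max_upto (fun i => Rabs (alpha (S i))) (N - 1)%nat.

Definition mu_min (xs : nat -> R) (N : nat) : R :=
  min_upto (fun i => a_coef xs N (S i)) (N - 1)%nat.

Definition rho_max (y : nat -> nat -> R) (N p : nat) : R :=
  max_upto (fun k => Rmax (Rabs (y 0%nat k)) (Rabs (y N k))) p.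

Definition M_const (xs : nat -> R) (y : nat -> nat -> R) (N p k : nat) : R :=
  2 * rho_max y N p * PI / 3
  * sum_f_R0 (fun l => ((xs N - xs 0%nat) / PI) ^ (2 * l)) (p - k).

(* Main.v *)
Require Import Defs.
From Stdlib Require Import Reals Lra Lia Psatz FunctionalExtensionality.
From Coquelicot Require Import Coquelicot.
Open Scope R_scope.

Definition sd_on (a b : R) (F G : R -> R) : Prop :=
  exists F' : R -> R, forall x, a <= x <= b ->
    derivable_pt_lim F x (F' x) /\ derivable_pt_lim F' x (G x).

Lemma deriv_zero_closed (F : R -> R) (a b x l : R) :
  a < b -> (forall t, a <= t <= b -> F t = 0) -> a <= x <= b ->
  derivable_pt_lim F x l -> l = 0.
Proof.
  intros Hab HF Hx Hd.
  destruct (Req_dec l 0) as [|Hl]; [assumption|exfalso].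
  assert (He : 0 < Rabs l) by (apply Rabs_pos_lt; auto).
  destruct (Hd (Rabs l) He) as [del Hdel].
  pose proof (cond_pos del) as Hdp.
  set (m := Rmin (del/2) ((b-a)/2)).
  assert (Hm1 : 0 < m) by (unfold m; apply Rmin_glb_lt; lra).
  assert (Hm2 : m <= del/2) by apply Rmin_l.
  assert (Hm3 : m <= (b-a)/2) by apply Rmin_r.
  destruct (Rle_dec x ((a+b)/2)) as [Hc|Hc].
  - specialize (Hdel m). rewrite (HF (x+m)) in Hdel by lra. rewrite (HF x) in Hdel by lra.
    assert (Rabs ((0 - 0) / m - l) < Rabs l) as H by (apply Hdel; [lra| rewrite Rabs_right; lra]).
    replace ((0-0)/m - l) with (-l) in H by (field; lra). rewrite Rabs_Ropp in H. lra.
  - specialize (Hdel (-m)). rewrite (HF (x+ -m)) in Hdel by lra. rewrite (HF x) in Hdel by lra.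
    assert (Rabs ((0 - 0) / -m - l) < Rabs l) as H by (apply Hdel; [lra| rewrite Rabs_left; lra]).
    replace ((0-0)/ -m - l) with (-l) in H by (field; lra). rewrite Rabs_Ropp in H. lra.
Qed.

Lemma sd_zero a b F G : a < b -> sd_on a b F G ->
  (forall x, a <= x <= b -> F x = 0) -> forall x, a <= x <= b -> G x = 0.
Proof.
  intros Hab [F' HF'] HF x Hx.
  assert (H1 : forall t, a <= t <= b -> F' t = 0).
  { intros t Ht. apply (deriv_zero_closed F a b t); auto. apply HF'; auto. }
  apply (deriv_zero_closed F' a b x); auto. apply HF'; auto.
Qed.

Lemma sd_extF a b F1 F2 G : (forall x, F1 x = F2 x) -> sd_on a b F1 G -> sd_on a b F2 G.
Proof. intros H. replace F2 with F1; auto. apply functional_extensionality; auto. Qed.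

Lemma sd_extG a b F G1 G2 : (forall x, a <= x <= b -> G1 x = G2 x) -> sd_on a b F G1 -> sd_on a b F G2.
Proof.
  intros H [F' HF']. exists F'. intros x Hx. destruct (HF' x Hx) as [h1 h2].
  split; auto. rewrite <- H; auto.
Qed.

Lemma sd_plus a b F1 G1 F2 G2 : sd_on a b F1 G1 -> sd_on a b F2 G2 ->
  sd_on a b (fun x => F1 x + F2 x) (fun x => G1 x + G2 x).
Proof.
  intros [f1 H1] [f2 H2]. exists (fun x => f1 x + f2 x). intros x Hx.
  destruct (H1 x Hx), (H2 x Hx). split; apply derivable_pt_lim_plus; auto.
Qed.

Lemma sd_scal a b c F G : sd_on a b F G -> sd_on a b (fun x => c * F x) (fun x => c * G x).
Proof.
  intros [f1 H1]. exists (fun x => c * f1 x). intros x Hx.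
  destruct (H1 x Hx). split; apply is_derive_Reals; apply is_derive_scal; apply is_derive_Reals; auto.
Qed.

Lemma sd_minus a b F1 G1 F2 G2 : sd_on a b F1 G1 -> sd_on a b F2 G2 ->
  sd_on a b (fun x => F1 x - F2 x) (fun x => G1 x - G2 x).
Proof.
  intros [f1 H1] [f2 H2]. exists (fun x => f1 x - f2 x). intros x Hx.
  destruct (H1 x Hx), (H2 x Hx). split; apply derivable_pt_lim_minus; auto.
Qed.

Lemma sd_sum a b (F G : nat -> R -> R) p :
  (forall l, (l <= p)%nat -> sd_on a b (F l) (G l)) ->
  sd_on a b (fun x => sum_f_R0 (fun l => F l x) p) (fun x => sum_f_R0 (fun l => G l x) p).
Proof.
  induction p; intros H.
  - simpl. apply H; lia.
  - simpl. apply sd_plus; [apply IHp; intros; apply H; lia| apply H; lia].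
Qed.

Lemma d_affine f c d x l : derivable_pt_lim f (c*x+d) l ->
  derivable_pt_lim (fun t => f (c*t+d)) x (c*l).
Proof.
  intros H. apply is_derive_Reals.
  apply is_derive_Reals in H.
  apply (is_derive_comp f (fun t => c*t+d) x l c); auto.
  auto_derive; auto; ring.
Qed.

Lemma sd_affine a b a' b' f g c d u : sd_on a' b' f g ->
  (forall x, u x = c*x+d) ->
  (forall x, a <= x <= b -> a' <= c*x+d <= b') ->
  sd_on a b (fun x => f (u x)) (fun x => c^2 * g (u x)).
Proof.
  intros [f' Hf] Hu Hin.
  replace u with (fun x => c*x+d) by (apply functional_extensionality; intros; rewrite Hu; auto).
  exists (fun x => c * f' (c*x+d)). intros x Hx. destruct (Hf _ (Hin x Hx)) as [h1 h2].
  split.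
  - apply d_affine; auto.
  - replace (c^2 * g (c*x+d)) with (c * (c * g (c*x+d))) by ring.
    apply is_derive_Reals; apply is_derive_scal; apply is_derive_Reals. apply d_affine; auto.
Qed.
Definition Lam2 (Lam : nat -> R -> R) (l i : nat) (t : R) : R :=
  if (i <=? l)%nat then Lam (l - i)%nat t else 0.

Lemma Lam2_sd Lam a b l i : Lidstone_family Lam -> sd_on a b (Lam2 Lam l i) (Lam2 Lam l (S i)).
Proof.
  intros [H0 HS]. unfold Lam2.
  destruct (Nat.leb_spec i l) as [Hil|Hil]; destruct (Nat.leb_spec (S i) l) as [Hil2|Hil2]; try lia.
  - replace (l - i)%nat with (S (l - S i)) by lia.
    destruct (HS (l - S i)%nat) as [[f' Hf] _]. exists f'. intros x _. apply Hf.
  - assert (l = i) by lia. subst. rewrite Nat.sub_diag.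
    exists (fun _ => 1). intros x _. split.
    + replace (Lam 0%nat) with (fun t : R => t) by (apply functional_extensionality; intros; rewrite H0; auto).
      apply derivable_pt_lim_id.
    + apply derivable_pt_lim_const.
  - exists (fun _ => 0). intros x _. split; apply derivable_pt_lim_const.
Qed.

Lemma sd_affine_glob a b f g c d u : (forall a' b', sd_on a' b' f g) ->
  (forall x, u x = c*x+d) ->
  sd_on a b (fun x => f (u x)) (fun x => c^2 * g (u x)).
Proof.
  intros Hf Hu. set (R0 := Rabs c * (Rabs a + Rabs b) + Rabs d).
  apply (sd_affine a b (-R0) R0 f g c d u (Hf _ _) Hu).
  intros x Hx. assert (Rabs x <= Rabs a + Rabs b).
  { unfold Rabs; repeat destruct Rcase_abs; lra. }
  assert (Rabs (c*x+d) <= R0).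
  { unfold R0. eapply Rle_trans; [apply Rabs_triang|]. rewrite Rabs_mult.
    pose proof (Rabs_pos c). nra. }
  apply Rabs_le_between; auto.
Qed.

Definition Pf (Lam : nat -> R -> R) (p : nat) (c d : nat -> R) (A B H : R) (i : nat) (t : R) : R :=
  sum_f_R0 (fun l => (c l * Lam2 Lam l i ((A - t)/H) + d l * Lam2 Lam l i ((t - B)/H))
                       * H^(2*l) * (/H)^(2*i)) p.

Lemma Pf_sd Lam p c d A B H i a b : Lidstone_family Lam -> H <> 0 ->
  sd_on a b (Pf Lam p c d A B H i) (Pf Lam p c d A B H (S i)).
Proof.
  intros HL HH. unfold Pf.
  apply sd_sum. intros l _.
  set (K := H^(2*l) * (/H)^(2*i)).
  apply (sd_extF _ _ (fun t => K * (c l * Lam2 Lam l i ((A - t)/H) + d l * Lam2 Lam l i ((t - B)/H)))).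
  { intros; unfold K; ring. }
  apply (sd_extG _ _ _ (fun t => K * (c l * ((-/H)^2 * Lam2 Lam l (S i) ((A - t)/H)) + d l * ((/H)^2 * Lam2 Lam l (S i) ((t - B)/H))))).
  { intros t _. unfold K. replace (2 * S i)%nat with (2*i + 2)%nat by lia. rewrite pow_add. ring. }
  apply sd_scal. apply sd_plus; apply sd_scal.
  - apply (sd_affine_glob a b _ _ (-/H) (A/H)); [intros; apply Lam2_sd; auto| ].
    intros; field; auto.
  - apply (sd_affine_glob a b _ _ (/H) (-B/H)); [intros; apply Lam2_sd; auto| ].
    intros; field; auto.
Qed.

Lemma concave_nonneg a b f f2 : a < b -> sd_on a b f f2 ->
  (forall x, a <= x <= b -> f2 x <= 0) -> f a = 0 -> f b = 0 ->
  forall t, a <= t <= b -> 0 <= f t.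
Proof.
  intros Hab [f' Hf] Hf2 Ha Hb t Ht.
  destruct (Rle_lt_dec 0 (f t)) as [|Hneg]; auto. exfalso.
  assert (Hta : a < t) by (destruct (Req_dec t a); [subst; lra| lra]).
  assert (Htb : t < b) by (destruct (Req_dec t b); [subst; lra| lra]).
  destruct (MVT_cor2 f f' a t Hta) as [c1 [E1 H1]]. { intros; apply Hf; lra. }
  destruct (MVT_cor2 f f' t b Htb) as [c2 [E2 H2]]. { intros; apply Hf; lra. }
  assert (c1 < c2) by lra.
  destruct (MVT_cor2 f' f2 c1 c2) as [c3 [E3 H3]]; auto. { intros; apply Hf; lra. }
  assert (f' c1 < 0) by nra. assert (0 < f' c2) by nra.
  assert (f2 c3 <= 0) by (apply Hf2; lra). nra.
Qed.
Lemma PI_le_32 : PI <= 16/5.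
Proof.
  destruct (Rle_lt_dec PI (16/5)) as [|H]; auto. exfalso.
  pose proof (SIN (16/5) ltac:(lra) ltac:(lra)) as [_ Hub].
  pose proof (sin_gt_0 (16/5) ltac:(lra) H).
  unfold sin_ub, sin_approx in Hub. cbn [sum_f_R0] in Hub. unfold sin_term in Hub.
  cbn [Nat.mul Nat.add] in Hub.
  rewrite !fact_simpl, !mult_INR in Hub. cbn [Factorial.fact INR pow] in Hub.
  lra.
Qed.

Lemma PI_ge_3 : 3 < PI.
Proof. pose proof PI2_3_2. lra. Qed.

Lemma sin_lb3 a : 0 <= a -> a <= PI -> a - a^3/6 <= sin a.
Proof.
  intros H1 H2. pose proof (SIN a H1 H2) as [Hlb _]. pose proof PI_le_32.
  unfold sin_lb, sin_approx in Hlb. cbn [sum_f_R0] in Hlb. unfold sin_term in Hlb.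
  cbn [Nat.mul Nat.add] in Hlb.
  rewrite !fact_simpl, !mult_INR in Hlb. cbn [Factorial.fact INR pow] in Hlb.
  assert (a*a <= 11) by nra.
  assert (0 <= a^5/120 - a^7/5040).
  { replace (a^5/120 - a^7/5040) with (a^5 * (42 - a*a) / 5040) by field.
    apply Rmult_le_pos; [apply Rmult_le_pos; [apply pow_le; lra| lra]| lra]. }
  simpl in *. lra.
Qed.

Lemma sd_sinpi a b K : sd_on a b (fun t => K * sin (PI * t)) (fun t => - (K * PI^2) * sin (PI * t)).
Proof.
  exists (fun t => K * PI * cos (PI * t)). intros x _. split.
  - apply is_derive_Reals. auto_derive; auto. ring.
  - apply is_derive_Reals. auto_derive; auto. ring.
Qed.

Lemma Lam1_expl Lam : Lidstone_family Lam -> forall t, 0 <= t <= 1 -> Lam 1%nat t = (t^3 - t)/6.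
Proof.
  intros HL. pose proof HL as [H0 HS].
  assert (Hsd : sd_on 0 1 (fun t => Lam 1%nat t - (t^3 - t)/6) (fun t => 0)).
  { apply (sd_extG _ _ _ (fun t => Lam 0%nat t - t)).
    { intros; rewrite H0; ring. }
    apply sd_minus.
    - destruct (HS 0%nat) as [[f' Hf] _]. exists f'; intros; apply Hf.
    - exists (fun t => (3*t^2 - 1)/6). intros x _; split; apply is_derive_Reals; auto_derive; auto; field. }
  destruct (HS 0%nat) as [_ [Z0 Z1]].
  intros t Ht.
  assert (A1 := concave_nonneg 0 1 _ _ ltac:(lra) Hsd ltac:(intros; lra) ltac:(cbv beta; rewrite Z0; field) ltac:(cbv beta; rewrite Z1; field) t Ht).
  assert (Hsd2 : sd_on 0 1 (fun t => - (Lam 1%nat t - (t^3 - t)/6)) (fun t => - 0)).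
  { apply (sd_extF _ _ (fun t => (-1) * (Lam 1%nat t - (t^3 - t)/6))); [intros; ring|].
    apply (sd_extG _ _ _ (fun t => (-1) * 0)); [intros; ring|]. apply sd_scal; auto. }
  assert (A2 := concave_nonneg 0 1 _ _ ltac:(lra) Hsd2 ltac:(intros; lra) ltac:(cbv beta; rewrite Z0; field) ltac:(cbv beta; rewrite Z1; field) t Ht).
  simpl in *. lra.
Qed.

Lemma base_ineq t : 0 <= t <= 1 -> PI * t * (1 - t^2) <= 2 * sin (PI * t).
Proof.
  intros Ht. pose proof PI_le_32. pose proof PI_ge_3.
  destruct (Rle_dec t (1/2)).
  - pose proof (sin_lb3 (PI*t) ltac:(nra) ltac:(nra)).
    assert (PI*t*((PI^2/3 - 1)*t^2 - 1) <= 0).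
    { assert ((PI^2/3 - 1)*t^2 - 1 <= 0). { simpl. assert (PI*PI <= 11) by nra. assert (t*t <= 1/4) by nra. nra. }
      assert (0 <= PI*t) by nra. nra. }
    simpl in *. nra.
  - replace (PI * t) with (PI - PI*(1-t)) by ring. rewrite sin_PI_x.
    set (u := 1 - t). assert (0 <= u <= 1/2) by (unfold u; lra).
    replace t with (1-u) by (unfold u; ring).
    pose proof (sin_lb3 (PI*u) ltac:(nra) ltac:(nra)).
    assert (PI*u*(u*(1 + PI^2/3) - 3) <= 0).
    { assert (u*(1 + PI^2/3) - 3 <= 0). { simpl. assert (PI*PI <= 11) by nra. nra. }
      assert (0 <= PI*u) by nra. nra. }
    simpl in *. nra.
Qed.

Lemma Lam_sin_bound Lam : Lidstone_family Lam -> forall j t, 0 <= t <= 1 ->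
  Rabs (Lam (S j) t) <= (/PI)^(2*j) / (3*PI) * sin (PI * t).
Proof.
  intros HL. pose proof HL as [H0 HS]. pose proof PI_ge_3.
  induction j; intros t Ht.
  - rewrite (Lam1_expl Lam HL t Ht). simpl.
    pose proof (base_ineq t Ht).
    assert (t*t*t - t <= 0) by nra.
    rewrite Rabs_left1 by (simpl; nra).
    apply (Rmult_le_reg_l (6*PI)); [lra|].
    replace (6*PI*(-((t*(t*(t*1)) - t)/6))) with (PI*t*(1-t^2)) by (simpl; field).
    replace (6 * PI * (1 / (3 * PI) * sin (PI * t))) with (2*sin (PI*t)) by (field; lra). auto.
  - set (K := (/PI)^(2*j) / (3*PI)).
    assert (HK : (/PI)^(2*S j) / (3*PI) = K / PI^2).
    { unfold K. replace (2 * S j)%nat with (2*j+2)%nat by lia. rewrite pow_add. field. lra. }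
    rewrite HK.
    destruct (HS (S j)) as [[f' Hf] [Z0 Z1]].
    assert (Hz : sd_on 0 1 (Lam (S (S j))) (Lam (S j))) by (exists f'; intros; apply Hf).
    assert (Hg := sd_sinpi 0 1 (K/PI^2)).
    assert (Hgg : forall x, - (K / PI ^ 2 * PI ^ 2) * sin (PI * x) = - (K * sin (PI*x))).
    { intros; field; lra. }
    assert (Hs0 : sin (PI * 0) = 0) by (rewrite Rmult_0_r; apply sin_0).
    assert (Hs1 : sin (PI * 1) = 0) by (rewrite Rmult_1_r; apply sin_PI).
    assert (B1 := concave_nonneg 0 1 _ _ ltac:(lra) (sd_minus _ _ _ _ _ _ Hg Hz)).
    assert (B2 := concave_nonneg 0 1 _ _ ltac:(lra) (sd_plus _ _ _ _ _ _ Hg Hz)).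
    simpl in B1, B2.
    assert (C1 : 0 <= K / PI ^ 2 * sin (PI * t) - Lam (S (S j)) t).
    { apply B1; auto.
      - intros x Hx. rewrite Hgg. specialize (IHj x Hx). apply Rabs_le_between in IHj. fold K in IHj. lra.
      - rewrite Hs0, Z0; ring.
      - rewrite Hs1, Z1; ring. }
    assert (C2 : 0 <= K / PI ^ 2 * sin (PI * t) + Lam (S (S j)) t).
    { apply B2; auto.
      - intros x Hx. rewrite Hgg. specialize (IHj x Hx). apply Rabs_le_between in IHj. fold K in IHj. lra.
      - rewrite Hs0, Z0; ring.
      - rewrite Hs1, Z1; ring. }
    apply Rabs_le_between. lra.
Qed.
Lemma Lam_pair_bound Lam : Lidstone_family Lam -> forall j t, 0 <= t <= 1 ->
  Rabs (Lam j t) + Rabs (Lam j (1 - t)) <= 2*PI/3 * (/PI)^(2*j).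
Proof.
  intros HL j t Ht. pose proof PI_ge_3. pose proof HL as [H0 _].
  destruct j.
  - rewrite !H0. simpl. rewrite !Rabs_right by lra. lra.
  - pose proof (Lam_sin_bound Lam HL j t Ht).
    pose proof (Lam_sin_bound Lam HL j (1-t) ltac:(lra)).
    pose proof (SIN_bound (PI*t)) as [_ S1]. pose proof (SIN_bound (PI*(1-t))) as [_ S2].
    assert (0 < (/PI)^(2*j) / (3*PI)).
    { apply Rdiv_lt_0_compat; [apply pow_lt; apply Rinv_0_lt_compat; lra| lra]. }
    replace (2*PI/3 * (/PI)^(2 * S j)) with (2 * ((/PI)^(2*j) / (3*PI))).
    + nra.
    + replace (2 * S j)%nat with (2*j+2)%nat by lia. rewrite pow_add. field. lra.
Qed.

Lemma max_upto_ge f m i : (i <= m)%nat -> f i <= max_upto f m.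
Proof.
  induction m; intros H; simpl.
  - replace i with 0%nat by lia. lra.
  - destruct (Nat.eq_dec i (S m)). + subst. apply Rmax_r.
    + eapply Rle_trans; [apply IHm; lia| apply Rmax_l].
Qed.

Lemma min_upto_le f m i : (i <= m)%nat -> min_upto f m <= f i.
Proof.
  induction m; intros H; simpl.
  - replace i with 0%nat by lia. lra.
  - destruct (Nat.eq_dec i (S m)). + subst. apply Rmin_r.
    + eapply Rle_trans; [apply Rmin_l| apply IHm; lia].
Qed.

Lemma min_upto_pos f m : (forall i, (i <= m)%nat -> 0 < f i) -> 0 < min_upto f m.
Proof.
  induction m; intros H; simpl. - apply H; lia.
  - apply Rmin_glb_lt; [apply IHm; intros; apply H; lia| apply H; lia].
Qed.

Lemma xs_mono (xs : nat -> R) N : (forall n, (n < N)%nat -> xs n < xs (S n)) ->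
  forall i j, (i <= j <= N)%nat -> xs i <= xs j.
Proof.
  intros H i j Hij. destruct Hij as [Hij HjN].
  induction j.
  - replace i with 0%nat by lia. lra.
  - destruct (Nat.eq_dec i (S j)). + subst; lra.
    + pose proof (H j ltac:(lia)). assert (xs i <= xs j) by (apply IHj; lia). lra.
Qed.

Lemma piece_exists (xs : nat -> R) N : (1 <= N)%nat -> (forall n, (n < N)%nat -> xs n < xs (S n)) ->
  forall x, xs 0%nat <= x <= xs N -> exists m, (1 <= m <= N)%nat /\ xs (m-1)%nat <= x <= xs m.
Proof.
  induction N; intros H1 Hinc x Hx. - lia.
  - destruct (Nat.eq_dec N 0) as [HN0|HN0].
    + subst. exists 1%nat. simpl. split; [lia| lra].
    + destruct (Rle_dec x (xs N)).
      * destruct (IHN ltac:(lia) ltac:(intros; apply Hinc; lia) x ltac:(lra)) as [m [Hm1 Hm2]].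
        exists m; split; [lia|auto].
      * exists (S N). split; [lia|]. replace (S N - 1)%nat with N by lia. lra.
Qed.

Lemma fin_max (g : nat -> R -> R) (lo hi : nat -> R) N : (1 <= N)%nat ->
  (forall n, (1 <= n <= N)%nat -> lo n <= hi n /\ forall c, lo n <= c <= hi n -> continuity_pt (g n) c) ->
  exists n0 t0, (1 <= n0 <= N)%nat /\ lo n0 <= t0 <= hi n0 /\
    forall n t, (1 <= n <= N)%nat -> lo n <= t <= hi n -> g n t <= g n0 t0.
Proof.
  induction N; intros H1 H. - lia.
  - destruct (H (S N) ltac:(lia)) as [Hlh Hc].
    destruct (continuity_ab_maj (g (S N)) (lo (S N)) (hi (S N)) Hlh Hc) as [t1 [Ht1 Ht1b]].
    destruct (Nat.eq_dec N 0) as [HN0|HN0].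
    + subst. exists 1%nat, t1. split; [lia|split; auto].
      intros n t Hn Ht. replace n with 1%nat in * by lia. auto.
    + destruct (IHN ltac:(lia) ltac:(intros; apply H; lia)) as [n0 [t0 [Hn0 [Ht0 Hmax]]]].
      destruct (Rle_dec (g n0 t0) (g (S N) t1)) as [Hle|Hnle].
      * exists (S N), t1. split; [lia|split; auto]. intros n t Hn Ht.
        destruct (Nat.eq_dec n (S N)) as [HnN|HnN]. { subst; auto. }
        eapply Rle_trans; [apply Hmax; auto; lia| auto].
      * exists n0, t0. split; [lia|split; auto]. intros n t Hn Ht.
        destruct (Nat.eq_dec n (S N)) as [HnN|HnN]. { subst. specialize (Ht1 t Ht). lra. }
        apply Hmax; auto; lia.
Qed.

Lemma deriv_family_cont f D m a b : deriv_family f D m a b ->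
  forall j x, (j <= m)%nat -> a <= x <= b -> continuity_pt (D j) x.
Proof.
  intros [_ [Hd Hc]] j x Hj Hx.
  destruct (Nat.eq_dec j m). - subst; auto.
  - apply derivable_continuous_pt. exists (D (S j) x). apply Hd; auto; lia.
Qed.

Lemma sum_shift (f : nat -> R) k m :
  sum_f_R0 (fun l => if (k <=? l)%nat then f (l - k)%nat else 0) (k + m) = sum_f_R0 f m.
Proof.
  induction m.
  - rewrite Nat.add_0_r. destruct k.
    + simpl. reflexivity.
    + set (G := fun l => if (S k <=? l)%nat then f (l - S k)%nat else 0).
      change (sum_f_R0 G (S k)) with (sum_f_R0 G k + G (S k)).
      assert (Hz : forall j, (j < S k)%nat -> sum_f_R0 G j = 0).
      { induction j; intros Hj.
        - simpl. unfold G. destruct (Nat.leb_spec (S k) 0); [lia| reflexivity].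
        - change (sum_f_R0 G (S j)) with (sum_f_R0 G j + G (S j)).
          rewrite IHj by lia. unfold G. destruct (Nat.leb_spec (S k) (S j)); [lia| ring]. }
      rewrite Hz by lia. unfold G. rewrite Nat.leb_refl, Nat.sub_diag. simpl. ring.
  - replace (k + S m)%nat with (S (k + m)) by lia.
    set (G := fun l => if (k <=? l)%nat then f (l - k)%nat else 0) in *.
    change (sum_f_R0 G (S (k+m))) with (sum_f_R0 G (k+m) + G (S (k+m))).
    change (sum_f_R0 f (S m)) with (sum_f_R0 f m + f (S m)).
    rewrite IHm. unfold G.
    destruct (Nat.leb_spec k (S (k+m))); [|lia]. replace (S (k+m) - k)%nat with (S m) by lia. reflexivity.
Qed.
Lemma Pf_bound Lam p (c d : nat -> R) A B H k rho t : Lidstone_family Lam ->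
  0 < H -> (k <= p)%nat -> (forall l, (l <= p)%nat -> Rabs (c l) <= rho /\ Rabs (d l) <= rho) ->
  0 <= (t - B)/H <= 1 -> (A - t)/H = 1 - (t - B)/H ->
  Rabs (Pf Lam p c d A B H k t) <= 2 * rho * PI / 3 * sum_f_R0 (fun l => (H/PI)^(2*l)) (p - k).
Proof.
  intros HL HH Hkp Hc Hv Hu. pose proof PI_ge_3.
  assert (Hrho : 0 <= rho) by (destruct (Hc 0%nat ltac:(lia)) as [h _]; pose proof (Rabs_pos (c 0%nat)); lra).
  unfold Pf. eapply Rle_trans; [apply sum_f_R0_triangle|].
  rewrite scal_sum.
  replace p with (k + (p - k))%nat at 1 by lia.
  rewrite <- (sum_shift _ k (p - k)).
  apply sum_Rle. intros l Hl. unfold Lam2.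
  destruct (Nat.leb_spec k l) as [Hkl|Hkl].
  - set (j := (l - k)%nat). replace l with (j + k)%nat in * by (unfold j; lia).
    replace (j + k - k)%nat with j by lia.
    assert (HP : H ^ (2 * (j + k)) * (/ H) ^ (2 * k) = H^(2*j)).
    { rewrite Nat.mul_add_distr_l, pow_add, Rmult_assoc, <- Rpow_mult_distr, Rinv_r by lra.
      rewrite pow1; ring. }
    rewrite Rmult_assoc, HP.
    destruct (Hc (j+k)%nat ltac:(lia)) as [Hc1 Hd1].
    pose proof (Lam_pair_bound Lam HL j ((t-B)/H) Hv) as Hpair. rewrite <- Hu in Hpair.
    rewrite Rabs_mult, (Rabs_right (H^(2*j))) by (apply Rle_ge, pow_le; lra).
    assert (Habs : Rabs (c (j + k)%nat * Lam j ((A - t) / H) + d (j + k)%nat * Lam j ((t - B) / H))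
             <= rho * (2*PI/3 * (/PI)^(2*j))).
    { eapply Rle_trans; [apply Rabs_triang|]. rewrite !Rabs_mult.
      pose proof (Rabs_pos (Lam j ((A-t)/H))). pose proof (Rabs_pos (Lam j ((t-B)/H))).
      pose proof (Rabs_pos (c (j+k)%nat)). pose proof (Rabs_pos (d (j+k)%nat)).
      nra. }
    replace ((H/PI)^(2*j) * (2*rho*PI/3)) with (rho * (2*PI/3 * (/PI)^(2*j)) * H^(2*j)).
    + apply Rmult_le_compat_r; [apply pow_le; lra| auto].
    + unfold Rdiv. rewrite Rpow_mult_distr. ring.
  - rewrite !Rmult_0_r, Rplus_0_r, !Rmult_0_l, Rabs_R0. lra.
Qed.

Lemma sd_induct a b (F : nat -> R -> R) K : a < b -> (forall x, a <= x <= b -> F 0%nat x = 0) ->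
  (forall i, (i < K)%nat -> sd_on a b (F i) (F (S i))) ->
  forall i, (i <= K)%nat -> forall x, a <= x <= b -> F i x = 0.
Proof.
  intros Hab H0 Hs i. induction i; intros Hi; auto.
  apply (sd_zero a b (F i) (F (S i)) Hab); [apply Hs; lia| apply IHi; lia].
Qed.

Lemma Dsd f D m a b : deriv_family f D m a b ->
  forall i, (2*i + 2 <= m)%nat -> sd_on a b (D (2*i)%nat) (D (2*S i)%nat).
Proof.
  intros [_ [Hd _]] i Hi. exists (D (S (2*i))). intros x Hx. split.
  - apply Hd; auto; lia.
  - replace (2 * S i)%nat with (S (S (2*i))) by lia. apply Hd; auto; lia.
Qed.

Lemma pow2S a i : a^(2 * S i) = a^(2*i) * a^2.
Proof. replace (2 * S i)%nat with (2*i+2)%nat by lia. apply pow_add. Qed.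

Lemma Lam2_0 Lam l t : Lam2 Lam l 0 t = Lam l t.
Proof. unfold Lam2. simpl. rewrite Nat.sub_0_r. auto. Qed.
Lemma Lx1 xs N n x : xs N - xs 0%nat <> 0 ->
  L_map xs N n x - xs (n-1)%nat = (xs n - xs (n-1)%nat) * ((x - xs 0%nat)/(xs N - xs 0%nat)).
Proof. intros. unfold L_map, a_coef. field. auto. Qed.

Lemma Lx2 xs N n x : xs N - xs 0%nat <> 0 ->
  xs n - L_map xs N n x = (xs n - xs (n-1)%nat) * ((xs N - x)/(xs N - xs 0%nat)).
Proof. intros. unfold L_map, a_coef. field. auto. Qed.

Lemma L_in xs N n x : xs 0%nat < xs N -> xs (n-1)%nat < xs n ->
  xs 0%nat <= x <= xs N -> xs (n-1)%nat <= L_map xs N n x <= xs n.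
Proof.
  intros H1 H2 Hx. pose proof (Lx1 xs N n x ltac:(lra)). pose proof (Lx2 xs N n x ltac:(lra)).
  assert (0 <= (x - xs 0%nat)/(xs N - xs 0%nat)) by (apply Rdiv_le_0_compat; lra).
  assert (0 <= (xs N - x)/(xs N - xs 0%nat)) by (apply Rdiv_le_0_compat; lra).
  split; nra.
Qed.

Definition PhiF Lam p y xs n i t :=
  Pf Lam p (y (n-1)%nat) (y n) (xs n) (xs (n-1)%nat) (xs n - xs (n-1)%nat) i t.
Definition RF Lam p y xs N i x :=
  Pf Lam p (y 0%nat) (y N) (xs N) (xs 0%nat) (xs N - xs 0%nat) i x.

Lemma q_decomp Lam xs y alpha N p n x : xs 0%nat < xs N -> xs (n-1)%nat < xs n ->
  q_fun Lam xs y alpha N p n x =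
  PhiF Lam p y xs n 0 (L_map xs N n x) - alpha n * RF Lam p y xs N 0 x.
Proof.
  intros H1 H2. unfold PhiF, RF, Pf. rewrite scal_sum, <- minus_sum. unfold q_fun.
  apply sum_eq. intros l _. rewrite !Lam2_0.
  assert (E1 : (xs n - L_map xs N n x) / (xs n - xs (n - 1)%nat) = (xs N - x)/(xs N - xs 0%nat)).
  { rewrite Lx2 by lra. field. lra. }
  assert (E2 : (L_map xs N n x - xs (n - 1)%nat) / (xs n - xs (n - 1)%nat) = (x - xs 0%nat)/(xs N - xs 0%nat)).
  { rewrite Lx1 by lra. field. lra. }
  rewrite E1, E2.
  assert (E3 : (xs n - xs (n - 1)%nat)^(2*l) = a_coef xs N n ^(2*l) * (xs N - xs 0%nat)^(2*l)).
  { rewrite <- Rpow_mult_distr. unfold a_coef. f_equal. field. lra. }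
  rewrite E3. change ((/ (xs n - xs (n - 1)%nat)) ^ (2 * 0)) with 1.
  change ((/ (xs N - xs 0%nat)) ^ (2 * 0)) with 1. ring.
Qed.

Lemma key_identity p N xs y alpha Lam ell Dell k n :
  Lidstone_family Lam -> xs 0%nat < xs N -> xs (n-1)%nat < xs n ->
  xs 0%nat <= xs (n-1)%nat -> xs n <= xs N ->
  deriv_family ell Dell (2*p) (xs 0%nat) (xs N) ->
  (forall x, xs 0%nat <= x <= xs N ->
     ell (L_map xs N n x) = alpha n * ell x + q_fun Lam xs y alpha N p n x) ->
  (k <= p)%nat ->
  forall x, xs 0%nat <= x <= xs N ->
   a_coef xs N n ^(2*k) * (Dell (2*k)%nat (L_map xs N n x) - PhiF Lam p y xs n k (L_map xs N n x))
   = alpha n * (Dell (2*k)%nat x - RF Lam p y xs N k x).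
Proof.
  intros HL H0N Hn Hn1 Hn2 Hell HFE Hk.
  set (a := a_coef xs N n).
  set (F := fun i x => a^(2*i) * Dell (2*i)%nat (L_map xs N n x) - alpha n * Dell (2*i)%nat x
              - (a^(2*i) * PhiF Lam p y xs n i (L_map xs N n x) - alpha n * RF Lam p y xs N i x)).
  assert (HLin : forall x, xs 0%nat <= x <= xs N -> xs 0%nat <= L_map xs N n x <= xs N).
  { intros x Hx. pose proof (L_in xs N n x H0N Hn Hx). lra. }
  assert (HF : forall x, xs 0%nat <= x <= xs N -> F k x = 0).
  { apply (sd_induct _ _ F k H0N).
    - intros x Hx. unfold F. change (2*0)%nat with 0%nat. destruct Hell as [HD0 _].
      rewrite (HD0 x Hx), (HD0 _ (HLin x Hx)), HFE by auto.
      rewrite q_decomp by lra. simpl. ring.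
    - intros i Hi. unfold F.
      apply (sd_extG _ _ _ (fun x => (a^(2*i) * (a^2 * Dell (2*S i)%nat (L_map xs N n x)) - alpha n * Dell (2*S i)%nat x)
              - (a^(2*i) * (a^2 * PhiF Lam p y xs n (S i) (L_map xs N n x)) - alpha n * RF Lam p y xs N (S i) x))).
      { intros x _. rewrite pow2S. ring. }
      apply sd_minus; apply sd_minus; apply sd_scal.
      + apply (sd_affine _ _ (xs 0%nat) (xs N) _ _ a ((xs N * xs (n - 1)%nat - xs 0%nat * xs n) / (xs N - xs 0%nat))).
        * apply (Dsd ell Dell (2*p)); auto. lia.
        * intros; reflexivity.
        * apply HLin.
      + apply (Dsd ell Dell (2*p)); auto. lia.
      + apply (sd_affine_glob _ _ _ _ a ((xs N * xs (n - 1)%nat - xs 0%nat * xs n) / (xs N - xs 0%nat))).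
        * intros. unfold PhiF. apply Pf_sd; auto; lra.
        * intros; reflexivity.
      + unfold RF. apply Pf_sd; auto; lra.
    - lia. }
  intros x Hx. specialize (HF x Hx). unfold F in HF. fold a. lra.
Qed.

Lemma phi_identity p xs y Lam Dphi k n :
  Lidstone_family Lam -> xs (n-1)%nat < xs n ->
  deriv_family (phi_piece Lam xs y p n) (Dphi n) (2*p) (xs (n-1)%nat) (xs n) ->
  (k <= p)%nat ->
  forall t, xs (n-1)%nat <= t <= xs n -> Dphi n (2*k)%nat t = PhiF Lam p y xs n k t.
Proof.
  intros HL Hn Hphi Hk.
  set (G := fun i t => Dphi n (2*i)%nat t - PhiF Lam p y xs n i t).
  assert (HG : forall t, xs (n-1)%nat <= t <= xs n -> G k t = 0).
  { apply (sd_induct _ _ G p Hn).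
    - intros t Ht. unfold G. destruct Hphi as [HD0 _]. simpl (2*0)%nat. rewrite HD0 by auto.
      unfold phi_piece, PhiF, Pf. apply Rminus_diag_eq, sum_eq. intros l _. rewrite !Lam2_0. simpl. ring.
    - intros i Hi. unfold G. apply sd_minus.
      + apply (Dsd _ _ _ _ _ Hphi). lia.
      + unfold PhiF. apply Pf_sd; auto; lra.
    - auto. }
  intros t Ht. specialize (HG t Ht). unfold G in HG. lra.
Qed.
Theorem corollary4p2
  (p N : nat) (xs : nat -> R) (y : nat -> nat -> R) (alpha : nat -> R)
  (Lam : nat -> R -> R) (ell : R -> R) (Dell : nat -> R -> R)
  (Dphi : nat -> nat -> R -> R) :
  (1 <= N)%nat ->
  (forall n : nat, (n < N)%nat -> xs n < xs (S n)) ->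
  in_Theta xs N p alpha ->
  Lidstone_family Lam ->
  deriv_family ell Dell (2 * p) (xs 0%nat) (xs N) ->
  (forall (n : nat) (x : R), (1 <= n <= N)%nat -> xs 0%nat <= x <= xs N ->
     ell (L_map xs N n x) = alpha n * ell x + q_fun Lam xs y alpha N p n x) ->
  (forall n : nat, (1 <= n <= N)%nat ->
     deriv_family (phi_piece Lam xs y p n) (Dphi n) (2 * p)
                  (xs (n - 1)%nat) (xs n)) ->
  forall k : nat, (1 <= k <= p)%nat ->
  alpha_sup N alpha < mu_min xs N ^ (2 * k) ->
  forall B : R,
  (forall (n : nat) (x : R), (1 <= n <= N)%nat -> xs (n - 1)%nat <= x <= xs n ->
     Rabs (Dphi n (2 * k)%nat x) <= B) ->
  forall (n : nat) (x : R), (1 <= n <= N)%nat -> xs (n - 1)%nat <= x <= xs n ->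
    Rabs (Dell (2 * k)%nat x - Dphi n (2 * k)%nat x)
      <= alpha_sup N alpha / (mu_min xs N ^ (2 * k) - alpha_sup N alpha)
         * (B + M_const xs y N p k).
Proof.
  intros HN Hinc _ HL Hell HFE Hphi k Hk Hmu B HB n x Hn Hx.
  pose proof (xs_mono xs N Hinc) as Hmono.
  assert (Hstep : forall m, (1 <= m <= N)%nat -> xs (m-1)%nat < xs m).
  { intros m Hm. pose proof (Hinc (m-1)%nat ltac:(lia)). replace (S (m-1)) with m in * by lia. auto. }
  assert (H0N : xs 0%nat < xs N).
  { pose proof (Hstep N ltac:(lia)). pose proof (Hmono 0%nat (N-1)%nat ltac:(lia)). lra. }
  set (D := xs N - xs 0%nat).
  set (A := alpha_sup N alpha). set (mu := mu_min xs N).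
  set (M := M_const xs y N p k).
  assert (HA0 : 0 <= A).
  { unfold A, alpha_sup. eapply Rle_trans; [apply (Rabs_pos (alpha 1%nat))|].
    apply (max_upto_ge (fun i => Rabs (alpha (S i))) (N-1) 0); lia. }
  assert (Hapos : forall m, (1 <= m <= N)%nat -> 0 < a_coef xs N m).
  { intros m Hm. unfold a_coef. apply Rdiv_lt_0_compat; [pose proof (Hstep m Hm)|]; lra. }
  assert (Hmu0 : 0 < mu).
  { unfold mu, mu_min. apply min_upto_pos. intros i Hi. apply Hapos. lia. }
  assert (HB0 : 0 <= B).
  { eapply Rle_trans; [apply Rabs_pos|]. apply (HB 1%nat (xs 0%nat)); [lia|].
    pose proof (Hstep 1%nat ltac:(lia)). simpl in *. lra. }
  assert (HR : forall z, xs 0%nat <= z <= xs N -> Rabs (RF Lam p y xs N k z) <= M).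
  { intros z Hz. unfold RF, M, M_const. apply (Pf_bound Lam p _ _ _ _ _ k _ z HL); try lra; try lia.
    - intros l Hl. unfold rho_max.
      pose proof (max_upto_ge (fun k0 => Rmax (Rabs (y 0%nat k0)) (Rabs (y N k0))) p l Hl). simpl in H.
      split; eapply Rle_trans; [apply Rmax_l| eauto| apply Rmax_r| eauto].
    - split; [apply Rdiv_le_0_compat|apply (Rmult_le_reg_r (xs N - xs 0%nat)); [|unfold Rdiv; rewrite Rmult_assoc, Rinv_l]]; lra.
    - field. lra. }
  assert (HM0 : 0 <= M).
  { eapply Rle_trans; [apply Rabs_pos| apply (HR (xs 0%nat))]. lra. }
  set (g := fun m t => Rabs (Dell (2*k)%nat t - Dphi m (2*k)%nat t)).
  destruct (fin_max g (fun m => xs (m-1)%nat) xs N HN) as [n0 [t0 [Hn0 [Ht0 Hmax]]]].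
  { intros m Hm. split; [pose proof (Hstep m Hm); lra|].
    intros c Hc. unfold g.
    pose proof (Hmono 0%nat (m-1)%nat ltac:(lia)). pose proof (Hmono m N ltac:(lia)).
    apply (continuity_pt_comp (fun t => Dell (2*k)%nat t - Dphi m (2*k)%nat t) Rabs).
    - apply continuity_pt_minus.
      + apply (deriv_family_cont _ _ _ _ _ Hell); [lia| lra].
      + apply (deriv_family_cont _ _ _ _ _ (Hphi m Hm)); [lia| lra].
    - apply Rcontinuity_abs. }
  set (Es := g n0 t0).
  assert (HEs : g n x <= Es) by (apply Hmax; auto).
  assert (HEs0 : 0 <= Es) by (unfold Es, g; apply Rabs_pos).
  set (h0 := xs n0 - xs (n0-1)%nat).
  assert (Hh0 : 0 < h0) by (unfold h0; pose proof (Hstep n0 Hn0); lra).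
  set (xi := xs 0%nat + D * ((t0 - xs (n0-1)%nat) / h0)).
  assert (Hxi : xs 0%nat <= xi <= xs N).
  { assert (0 <= (t0 - xs (n0-1)%nat)/h0 <= 1).
    { split; [apply Rdiv_le_0_compat; lra|].
      apply (Rmult_le_reg_r h0); auto. unfold Rdiv; rewrite Rmult_assoc, Rinv_l by lra. unfold h0; lra. }
    unfold xi, D. nra. }
  assert (HLxi : L_map xs N n0 xi = t0).
  { unfold xi, L_map, a_coef, h0, D in *. field. split; lra. }
  pose proof (Hmono 0%nat (n0-1)%nat ltac:(lia)). pose proof (Hmono n0 N ltac:(lia)).
  pose proof (key_identity p N xs y alpha Lam ell Dell k n0 HL H0N (Hstep n0 Hn0) ltac:(lra) ltac:(lra) Hell
               (fun z Hz => HFE n0 z Hn0 Hz) ltac:(lia) xi Hxi) as Hkey.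
  rewrite HLxi in Hkey.
  rewrite <- (phi_identity p xs y Lam Dphi k n0 HL (Hstep n0 Hn0) (Hphi n0 Hn0) ltac:(lia) t0 Ht0) in Hkey.
  destruct (piece_exists xs N HN Hinc xi Hxi) as [m [Hm Hxm]].
  assert (Hbd : Rabs (Dell (2*k)%nat xi - RF Lam p y xs N k xi) <= Es + B + M).
  { replace (Dell (2*k)%nat xi - RF Lam p y xs N k xi) with
      ((Dell (2*k)%nat xi - Dphi m (2*k)%nat xi) + Dphi m (2*k)%nat xi - RF Lam p y xs N k xi) by ring.
    eapply Rle_trans; [apply Rabs_triang|]. rewrite Rabs_Ropp.
    eapply Rle_trans; [apply Rplus_le_compat_r, Rabs_triang|].
    pose proof (Hmax m xi Hm Hxm) as Q1. pose proof (HB m xi Hm Hxm). pose proof (HR xi Hxi).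
    fold Es in Q1. unfold g in Q1. lra. }
  assert (Hal : Rabs (alpha n0) <= A).
  { unfold A, alpha_sup. replace n0 with (S (n0-1)) at 1 by lia.
    apply (max_upto_ge (fun i => Rabs (alpha (S i)))). lia. }
  assert (Hmua : mu <= a_coef xs N n0).
  { unfold mu, mu_min. pose proof (min_upto_le (fun i => a_coef xs N (S i)) (N-1) (n0-1) ltac:(lia)) as Q.
    simpl in Q. replace (S (n0-1)) with n0 in Q by lia. exact Q. }
  assert (Hpw : mu^(2*k) <= a_coef xs N n0 ^(2*k)) by (apply pow_incr; lra).
  assert (HaE : a_coef xs N n0 ^(2*k) * Es <= A * (Es + B + M)).
  { apply (f_equal Rabs) in Hkey. rewrite !Rabs_mult in Hkey.
    rewrite (Rabs_right (a_coef xs N n0 ^ (2*k))) in Hkey by (apply Rle_ge, pow_le; pose proof (Hapos n0 Hn0); lra).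
    unfold Es, g. rewrite Hkey.
    pose proof (Rabs_pos (alpha n0)). pose proof (Rabs_pos (Dell (2 * k)%nat xi - RF Lam p y xs N k xi)).
    apply Rmult_le_compat; auto. }
  assert (Hfin : Es <= A / (mu^(2*k) - A) * (B + M)).
  { assert (Hd : 0 < mu^(2*k) - A) by (unfold mu, A; lra).
    replace (A / (mu^(2*k) - A) * (B + M)) with (A * (B+M) / (mu^(2*k) - A)) by (field; lra).
    apply (Rmult_le_reg_r (mu^(2*k) - A)); auto.
    unfold Rdiv. rewrite Rmult_assoc, Rinv_l by lra.
    assert (mu^(2*k) * Es <= a_coef xs N n0 ^(2*k) * Es) by (apply Rmult_le_compat_r; auto). lra. }
  unfold g in HEs. fold A mu M. lra.
Qed.
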